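(* Let $n\ge 1$ and let $\mathcal P(n,1,1)$ be the set of lattice paths with steps $(1,1)$ (up) and $(1,-1)$ (down) from $(0,0)$ to $(2n+1,1)$. (1) For each $k=1,2,\dots,n+1$, the number of paths in $\mathcal P(n,1,1)$ that start with an up step and have exactly $k$ up steps starting on or below the $x$-axis is $\frac{1}{n+1}\binom{2n}{n}$. (2) For each $k=1,2,\dots,n$, the number of paths in $\mathcal P(n,1,1)$ that start with a down step and have exactly $k$ down steps starting on or below the $x$-axis is $\frac{1}{n}\binom{2n}{n-1}$. (3) For each $k=1,2,\dots,2n+1$, the number of paths in $\mathcal P(n,1,1)$ with exactly $k$ vertices on or below the $x$-axis is $\frac{1}{2n+1}\binom{2n+1}{n}$.
   Context: A step starts on or below the $x$-axis if its initial vertex has $y$-coordinate $\le 0$. A vertex is on or below the $x$-axis if its $y$-coordinate is $\le 0$ (the final vertex, at height $1$, is never counted). *)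

(* Defs.v *)
From mathcomp Require Import all_boot all_order all_algebra.
Set Implicit Arguments. Unset Strict Implicit. Unset Printing Implicit Defensive.
Import Order.TTheory GRing.Theory Num.Theory.

Local Open Scope ring_scope.

(* A path is a boolean word: true = up step (1,1), false = down step (1,-1). *)
Definition step (b : bool) : int := if b then 1 else -1.

Definition height (s : seq bool) : int := \sum_(b <- s) step b.

(* The i-th vertex (i = 0..size p) has height  height (take i p);
   step i starts at vertex i. *)

Definition ups_low (p : seq bool) : nat :=
  count (fun i => nth false p i && (height (take i p) <= 0)) (iota 0 (size p)).

Definition downs_low (p : seq bool) : nat :=
  count (fun i => ~~ nth false p i && (height (take i p) <= 0)) (iota 0 (size p)).

(* number of vertices on or below the x-axis; vertices 0..size p - 1
   (the final vertex, at height 1 for paths in P(n,1,1), is never counted) *)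
Definition verts_low (p : seq bool) : nat :=
  count (fun i => height (take i p) <= 0) (iota 0 (size p)).

Definition P11 (n : nat) : {set (2 * n + 1)%N.-tuple bool} :=
  [set p : (2 * n + 1)%N.-tuple bool | height p == 1].

(* Main.v *)
Require Import Defs.
From mathcomp Require Import all_boot all_order all_algebra.
From mathcomp Require Import zify ring lra.
Import Order.TTheory GRing.Theory Num.Theory.
Local Open Scope ring_scope.

Lemma height_cat a b : height (a ++ b) = height a + height b.
Proof. by rewrite /height big_cat. Qed.

Lemma height_count s : height s = 2 * (count id s)%:Z - (size s)%:Z.
Proof.
elim: s => [|b s IH]; first by rewrite /height big_nil.
rewrite /height big_cons -/(height s) IH /=.
case: b => /=; rewrite /step /=; lia.
Qed.

Lemma height_rot_lo {j i s} : (j <= size s)%N -> (i <= size s - j)%N ->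
  height (take i (rot j s)) = height (take (j + i) s) - height (take j s).
Proof.
move=> hj hi; rewrite /rot takel_cat ?size_drop // take_drop.
rewrite [(j + i)%N]addnC -{2}(cat_take_drop j (take (i + j) s)) height_cat take_takel ?leq_addl //; ring.
Qed.

Lemma height_rot_hi {j i s} : (j <= size s)%N -> (size s - j <= i <= size s)%N ->
  height (take i (rot j s)) =
  height s - height (take j s) + height (take (i - (size s - j)) s).
Proof.
move=> hj /andP[h1 h2]; rewrite /rot take_cat size_drop ltnNge h1 /=.
rewrite height_cat take_takel; last by lia.
rewrite -[in height s](cat_take_drop j s) height_cat; ring.
Qed.

Lemma nth_rot0 j (s : seq bool) : (j < size s)%N -> nth false (rot j s) 0 = nth false s j.
Proof. by move=> hj; rewrite /rot nth_cat size_drop subn_gt0 hj nth_drop addn0. Qed.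
Lemma arith_lo (m t j : nat) (a b : int) : (j <= t < m)%N ->
  (a - b <= 0) = (m%:Z * a - t%:Z <= m%:Z * b - j%:Z).
Proof.
move=> /andP[h1 h2]; apply/idP/idP => H.
  have : m%:Z * (a - b) <= 0 by nia. nia.
case: (lerP (a - b) 0) => // H2; exfalso.
have : m%:Z * (a - b - 1) >= 0 by nia. nia.
Qed.
Lemma arith_hi (m t j : nat) (a b : int) : (t < j < m)%N ->
  (1 - b + a <= 0) = (m%:Z * a - t%:Z <= m%:Z * b - j%:Z).
Proof.
move=> /andP[h1 h2]; apply/idP/idP => H.
  have : m%:Z * (a - b + 1) <= 0 by nia. nia.
case: (lerP (1 - b + a) 0) => // H2; exfalso.
have : m%:Z * (a - b) >= 0 by nia. nia.
Qed.
Lemma arith_inj (m t t' : nat) (a b : int) : (t < m)%N -> (t' < m)%N ->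
  m%:Z * a - t%:Z = m%:Z * b - t'%:Z -> t = t'.
Proof.
move=> h1 h2 H.
case: (ltrgtP a b) => H2.
- have : m%:Z * (b - a - 1) >= 0 by nia. nia.
- have : m%:Z * (a - b - 1) >= 0 by nia. nia.
- subst; lia.
Qed.

Definition hh s t := height (take t s).
Definition FF (s : seq bool) t : int := (size s)%:Z * hh s t - t%:Z.
Definition cnt (q : bool -> bool) s :=
  count (fun i => q (nth false s i) && (height (take i s) <= 0)) (iota 0 (size s)).
Definition GG q s j t := q (nth false s t) && (FF s t <= FF s j).

Lemma cnt_rot q s j : height s = 1 -> (j < size s)%N ->
  cnt q (rot j s) = count (GG q s j) (iota 0 (size s)).
Proof.
move=> hs hj; rewrite /cnt size_rot.
have e1 : iota 0 (size s) = iota 0 (size s - j) ++ iota (size s - j) j.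
  by rewrite -iotaD subnK // ltnW.
have e2 : iota 0 (size s) = iota 0 j ++ iota j (size s - j).
  by rewrite -iotaD subnKC // ltnW.
rewrite {1}e1 e2 !count_cat addnC; congr (_ + _)%N.
- rewrite -[in LHS](addn0 (size s - j)%N) iotaDl count_map; apply: eq_in_count => t.
  rewrite mem_iota /= add0n => ht.
  have ht' : (size s - j <= size s - j + t <= size s)%N.
    by clear -ht hj; rewrite leq_addr /=; lia.
  rewrite (height_rot_hi (ltnW hj) ht') addKn hs.
  rewrite /rot nth_cat size_drop ltnNge leq_addr /= addKn nth_take //.
  rewrite /GG /FF /hh; congr (_ && _); apply: arith_hi.
  by clear -ht hj; lia.
- rewrite (_ : iota j (size s - j) = map (addn j) (iota 0 (size s - j))); last by rewrite -iotaDl addn0.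
  rewrite count_map; apply: eq_in_count => i.
  rewrite mem_iota /= add0n => hi.
  have hi' : (i <= size s - j)%N by apply: ltnW.
  rewrite (height_rot_lo (ltnW hj) hi').
  rewrite /rot nth_cat size_drop hi nth_drop /GG /FF /hh.
  congr (_ && _); apply: arith_lo.
  by clear -hi hj; lia.
Qed.

Lemma count_nth (q : pred bool) s : count q s = count (fun i => q (nth false s i)) (iota 0 (size s)).
Proof. by rewrite -{1}(mkseq_nth false s) /mkseq count_map. Qed.

Lemma GG_mono {q : pred bool} {s j j'} : FF s j < FF s j' -> (j' < size s)%N -> q (nth false s j') ->
  ((count (GG q s j) (iota 0 (size s))).+1 <= count (GG q s j') (iota 0 (size s)))%N.
Proof.
move=> hF hj' hq.
have hu : uniq (iota 0 (size s)) by apply: iota_uniq.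
have hm : j' \in iota 0 (size s) by rewrite mem_iota.
have := count_predUI (GG q s j) (pred1 j') (iota 0 (size s)).
rewrite (count_uniq_mem _ hu) hm.
rewrite (@eq_count _ (predI _ _) pred0); last first.
  move=> t /=; rewrite /GG; case: eqP => [->|]; last by rewrite andbF.
  by rewrite andbT leNgt hF andbF.
rewrite count_pred0 addn0 /= addn1 => <-; apply: sub_count => t /=.
case/orP => [|/eqP ->]; last by rewrite /GG hq lexx.
by rewrite /GG => /andP[-> h]; apply: le_trans h (ltW hF).
Qed.

Lemma FF_inj s j j' : (j < size s)%N -> (j' < size s)%N -> FF s j = FF s j' -> j = j'.
Proof. by move=> h1 h2; rewrite /FF; apply: arith_inj. Qed.

Definition cc (q : pred bool) s j := count (GG q s j) (iota 0 (size s)).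

Lemma cc_inj {q : pred bool} {s j j'} : (j < size s)%N -> (j' < size s)%N ->
  q (nth false s j) -> q (nth false s j') -> cc q s j = cc q s j' -> j = j'.
Proof.
move=> h1 h2 q1 q2; rewrite /cc.
case: (ltrgtP (FF s j) (FF s j')) => H e.
- by have := GG_mono H h2 q2; rewrite e ltnn.
- by have := GG_mono H h1 q1; rewrite e ltnn.
- exact: FF_inj H.
Qed.

Lemma unique_rot (q : pred bool) s k : height s = 1 -> (1 <= k <= count q s)%N ->
  count (fun j => q (nth false s j) && (cnt q (rot j s) == k)) (iota 0 (size s)) = 1%N.
Proof.
move=> hs hk.
set L := [seq j <- iota 0 (size s) | q (nth false s j)].
have sL : size L = count q s by rewrite size_filter count_nth.
have memL j : (j \in L) = (j < size s)%N && q (nth false s j).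
  by rewrite mem_filter mem_iota andbC.
have uL : uniq (map (cc q s) L).
  rewrite map_inj_in_uniq ?filter_uniq ?iota_uniq // => j j'.
  rewrite !memL => /andP[a b] /andP[c d]; exact: cc_inj.
have sub : {subset map (cc q s) L <= iota 1 (size L)}.
  move=> x /mapP[j]; rewrite memL => /andP[hj hq] ->.
  rewrite mem_iota add1n ltnS; apply/andP; split.
    rewrite /cc -has_count; apply/hasP; exists j; first by rewrite mem_iota.
    by rewrite /GG hq lexx.
  rewrite sL count_nth; apply: sub_count => t; rewrite /GG; by case/andP.
have hsz : (size (iota 1 (size L)) <= size (map (cc q s) L))%N by rewrite size_iota size_map.
have [_ eqm] := uniq_min_size uL sub hsz.
have : k \in map (cc q s) L by rewrite eqm mem_iota add1n ltnS sL.
case/mapP => j0; rewrite memL => /andP[hj0 hq0] hk0.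
rewrite (@eq_in_count _ _ (pred1 j0)); last first.
  move=> j; rewrite mem_iota add0n /= => hj.
  rewrite cnt_rot // -/(cc q s j) hk0.
  apply/idP/idP => [/andP[hq /eqP e]|/eqP ->]; last by rewrite hq0 eqxx.
  by apply/eqP; apply: (cc_inj hj hj0 hq hq0 e).
by rewrite (count_uniq_mem _ (iota_uniq 0 (size s))) mem_iota add0n hj0.
Qed.

Lemma sum_count (r : seq nat) (a : pred nat) : (\sum_(i <- r) (a i : nat))%N = count a r.
Proof. by elim: r => [|x r IH]; rewrite ?big_nil ?big_cons //= IH. Qed.

Lemma sum_nat_card (T : finType) (A : {set T}) : (\sum_(p : T) ((p \in A) : nat))%N = #|A|.
Proof. by rewrite -sum1_card [in RHS]big_mkcond /=; apply: eq_bigr => p _; case: (p \in A). Qed.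

Lemma height_rotr j s : height (rotr j s) = height s.
Proof. by rewrite /height (perm_big _ (introT idP (etrans (perm_rotr j s s) (perm_refl s)))). Qed.

Lemma main_count (n : nat) (q : pred bool) k :
  (forall p : (2*n+1).-tuple bool, p \in P11 n -> (1 <= k <= count q p)%N) ->
  (#|[set p in P11 n | q (nth false p 0) && (cnt q p == k)]| * (2*n+1) = #|P11 n|)%N.
Proof.
move=> hk.
set m := (2*n+1)%N.
set S := [set p in P11 n | _].
pose B (j : 'I_m) (p : m.-tuple bool) : bool :=
  (p \in P11 n) && q (nth false p j) && (cnt q (rot j p) == k).
have E : (\sum_(j : 'I_m) \sum_(p : m.-tuple bool) (B j p : nat) =
          \sum_(p : m.-tuple bool) \sum_(j : 'I_m) (B j p : nat))%N by apply: exchange_big.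
have L : forall j : 'I_m, (\sum_(p : m.-tuple bool) (B j p : nat))%N = #|S|.
  move=> j.
  have inj : injective (fun p : m.-tuple bool => [tuple of rotr j p]).
    by move=> x y /(congr1 val) /= /(congr1 (rot j)); rewrite !rotrK => /val_inj.
  rewrite (reindex_inj inj) -sum_nat_card; apply: eq_bigr => p _.
  rewrite /B /= rotrK !inE height_rotr.
  rewrite -(nth_rot0 j (rotr j p)) ?rotrK ?size_rotr ?size_tuple ?ltn_ord //.
  by rewrite andbA.
have R : forall p : m.-tuple bool, (\sum_(j : 'I_m) (B j p : nat))%N = (p \in P11 n).
  move=> p; rewrite /B; case hp: (p \in P11 n) => /=; last by rewrite big1.
  rewrite -(big_mkord xpredT (fun j => (q (nth false p j) && (cnt q (rot j p) == k) : nat))).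
  rewrite /index_iota subn0 sum_count.
  have := @unique_rot q p k.
  rewrite size_tuple; apply; last exact: hk.
  by move: hp; rewrite inE => /eqP.
move: E; rewrite (eq_bigr _ (fun j _ => L j)) (eq_bigr _ (fun p _ => R p)).
by rewrite sum_nat_card sum_nat_const card_ord mulnC.
Qed.
Lemma card_count_tuple m k : #|[set t : m.-tuple bool | count id t == k]| = 'C(m, k).
Proof.
rewrite -[in RHS](card_ord m) -card_draws.
pose g (A : {set 'I_m}) : m.-tuple bool := [tuple i \in A | i < m].
have gt A i : tnth (g A) i = (i \in A) by rewrite tnth_mktuple.
have ginj : injective g.
  by move=> A B e; apply/setP => i; rewrite -!gt e.
have gc A : count id (g A) = #|A|.
  rewrite /= count_map /= cardE /enum_mem size_filter.
  by rewrite (@eq_filter _ _ predT) ?filter_predT //; apply: eq_count.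
rewrite -(card_imset _ ginj); apply: eq_card => t; rewrite inE.
apply/idP/imsetP => [/eqP ht|[A]].
  exists [set i | tnth t i]; last by apply: eq_from_tnth => i; rewrite gt inE.
  have et : g [set i | tnth t i] = t by apply: eq_from_tnth => i; rewrite gt inE.
  by rewrite inE -ht -gc et.
by rewrite inE => /eqP <- ->; rewrite gc.
Qed.

Lemma P11_count n (p : (2*n+1).-tuple bool) : (p \in P11 n) = (count id p == n.+1).
Proof.
rewrite inE height_count size_tuple; apply/eqP/eqP => h; lia.
Qed.

Lemma card_P11 n : #|P11 n| = 'C(2*n+1, n).
Proof.
rewrite (@eq_card _ _ [set t : (2*n+1).-tuple bool | count id t == n.+1]); last first.
  by move=> p; rewrite P11_count inE.
rewrite card_count_tuple -bin_sub; last by lia.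
by congr 'C(_, _); lia.
Qed.

Lemma gen_rat (c d e : nat) : (0 < d)%N -> (c * d = e)%N -> (c%:R : rat) = e%:R / d%:R.
Proof.
move=> hd <-; rewrite natrM mulfK //; by rewrite pnatr_eq0 -lt0n.
Qed.

Theorem theorem5 (n : nat) : (1 <= n)%N ->
  (forall k : nat, (1 <= k <= n + 1)%N ->
     (#|[set p in P11 n | (head false p) && (ups_low p == k)]|%:R : rat)
       = 'C(2 * n, n)%:R / (n + 1)%:R) /\
  (forall k : nat, (1 <= k <= n)%N ->
     (#|[set p in P11 n | (~~ head true p) && (downs_low p == k)]|%:R : rat)
       = 'C(2 * n, n.-1)%:R / n%:R) /\
  (forall k : nat, (1 <= k <= 2 * n + 1)%N ->
     (#|[set p in P11 n | verts_low p == k]|%:R : rat)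
       = 'C(2 * n + 1, n)%:R / (2 * n + 1)%:R).
Proof.
move=> hn; split; [|split].
- move=> k hk.
  have := @main_count n id k.
  rewrite card_P11 => H.
  have {}H : (#|[set p in P11 n | (head false p) && (ups_low p == k)]| * (2*n+1) = 'C(2*n+1, n))%N.
    rewrite -H; last by move=> p; rewrite P11_count => /eqP ->; lia.
    by congr (_ * _)%N; apply: eq_card => p.
  apply: gen_rat; first by lia.
  have M := mul_bin_down (2*n+1) n.
  have e1 : ((2*n+1).-1 = 2 * n)%N by lia.
  have e2 : (2*n+1 - n = n + 1)%N by lia.
  rewrite e1 e2 -H in M.
  apply/eqP; rewrite -(eqn_pmul2r (_ : 0 < 2*n+1)%N); last by lia.
  by apply/eqP; rewrite [in RHS]mulnC M; lia.
- move=> k hk.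
  have := @main_count n negb k.
  rewrite card_P11 => H.
  have {}H : (#|[set p in P11 n | (~~ head true p) && (downs_low p == k)]| * (2*n+1) = 'C(2*n+1, n))%N.
    rewrite -H; last first.
      move=> p; rewrite P11_count => /eqP hc.
      have := count_predC id p; rewrite hc size_tuple.
      rewrite (@eq_count _ (predC id) negb) // => h2; lia.
    congr (_ * _)%N; apply: eq_card => p; rewrite !inE.
    by move: (size_tuple p); case: (tval p) => [|b s]; rewrite ?addn1.
  apply: gen_rat; first by lia.
  have M := mul_bin_diag (2*n+1) n.-1.
  have e1 : ((2*n+1).-1 = 2 * n)%N by lia.
  have e2 : ((n.-1).+1 = n)%N by lia.
  rewrite e1 e2 -H in M.
  apply/eqP; rewrite -(eqn_pmul2r (_ : 0 < 2*n+1)%N); last by lia.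
  by apply/eqP; rewrite [in RHS]mulnC M; lia.
- move=> k hk.
  have := @main_count n predT k.
  rewrite card_P11 => H.
  apply: gen_rat; first by lia.
  rewrite -H; last by move=> p _; rewrite count_predT size_tuple.
  by congr (_ * _)%N; apply: eq_card => p; rewrite !inE.
Qed.
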